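(* Let $u$ be a vertex of $K$ and $n\in\mathbb N$. The edge-path distance from any boundary vertex of the ball $B(u,n,K)$ to $u$ is either $n$ or $n-1$.
   Context: $K$ is the pentagonal combinatorial tiling: a 2-dimensional CW-complex homeomorphic to the open disk, obtained as follows. The subdivision rule $\omega$ acts on a pentagon with boundary vertices $v_1,\dots,v_5$ in cyclic order (indices mod 5): add a vertex $m_i$ inside each edge $v_iv_{i+1}$, interior vertices $c_1,\dots,c_5$, edges $c_ic_{i+1}$ and $c_im_i$, and replace the face by the central pentagon $c_1\cdots c_5$ and petals $v_i\,m_i\,c_i\,c_{i-1}\,m_{i-1}$. $K_0$ is one pentagon, $K_n=\omega^n(K_0)$, $K_n$ embeds onto the central superpentagon $\omega^n(\text{central face of }\omega(K_0))$ of $K_{n+1}$, and $K$ is the direct limit. Distance between vertices is the length of a shortest edge path. $B(u,n,K)$ is the subcomplex of $K$ consisting of the faces all of whose vertices are at distance at most $n$ from $u$, with their edges and vertices. Its boundary consists of the edges $e$ that lie in a face in the ball and in a face not in the ball, together with their vertices. *)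

(* Defs.v *)
From HB Require Import structures.
From mathcomp Require Import all_boot.
Set Implicit Arguments. Unset Strict Implicit. Unset Printing Implicit Defensive.

(* Orig i : the 5 vertices v_0..v_4 of K_0 (i < 5);
   Mid a b : the vertex added inside the edge {a,b} (stored canonically, see [mid]);
   Cen a b i : the interior vertex c_i added in the face whose listed boundary
   starts with the directed edge a -> b (a consistently oriented face is
   determined by a directed edge). *)
Inductive vtx := Orig of nat | Mid of vtx & vtx | Cen of vtx & vtx & nat.

Fixpoint vtx2tree (v : vtx) : GenTree.tree nat :=
  match v with
  | Orig i => GenTree.Leaf i
  | Mid a b => GenTree.Node 0 [:: vtx2tree a; vtx2tree b]
  | Cen a b i => GenTree.Node i.+1 [:: vtx2tree a; vtx2tree b]
  end.

Fixpoint tree2vtx (t : GenTree.tree nat) : option vtx :=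
  match t with
  | GenTree.Leaf i => Some (Orig i)
  | GenTree.Node 0 [:: ta; tb] =>
      match tree2vtx ta, tree2vtx tb with
      | Some a, Some b => Some (Mid a b) | _, _ => None end
  | GenTree.Node i.+1 [:: ta; tb] =>
      match tree2vtx ta, tree2vtx tb with
      | Some a, Some b => Some (Cen a b i) | _, _ => None end
  | _ => None
  end.

Lemma vtx2treeK : pcancel vtx2tree tree2vtx.
Proof. by elim=> [i|a IHa b IHb|a IHa b IHb i] //=; rewrite IHa IHb. Qed.

HB.instance Definition _ := Countable.copy vtx (pcan_type vtx2treeK).

Fixpoint vcmp (a b : vtx) : comparison :=
  match a, b with
  | Orig i, Orig j => Nat.compare i j
  | Orig _, _ => Lt
  | Mid _ _, Orig _ => Gt
  | Mid a1 a2, Mid b1 b2 =>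
      match vcmp a1 b1 with Eq => vcmp a2 b2 | c => c end
  | Mid _ _, Cen _ _ _ => Lt
  | Cen a1 a2 i, Cen b1 b2 j =>
      match vcmp a1 b1 with
      | Eq => match vcmp a2 b2 with Eq => Nat.compare i j | c => c end
      | c => c end
  | Cen _ _ _, _ => Gt
  end.

(* canonical (symmetric) name of the midpoint of the edge {a,b} *)
Definition mid (a b : vtx) : vtx :=
  if vcmp a b is Gt then Mid b a else Mid a b.

(* A face is the list of its boundary vertices in cyclic order. *)
Definition face := seq vtx.

(* The subdivision rule omega on one pentagon v_0 .. v_4 (indices mod 5):
   central pentagon c_0..c_4 and petals v_i m_i c_i c_{i-1} m_{i-1}. *)
Definition subdiv_face (f : face) : seq face :=
  let v i := nth (Orig 0) f (i %% 5) in
  let m i := mid (v i) (v i.+1) in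
  let c i := Cen (v 0) (v 1) (i %% 5) in
  [:: [seq c i | i <- iota 0 5] &
      [seq [:: v i; m i; c i; c (i + 4); m (i + 4)] | i <- iota 0 5]].

Definition omega (X : seq face) : seq face := flatten (map subdiv_face X).

Definition P0 : face := [seq Orig i | i <- iota 0 5].

Definition Kn (n : nat) : seq face := iter n omega [:: P0].

(* Renaming induced by the embedding of K_0 onto the central face of omega(K_0);
   it commutes with omega, so lift k embeds K_n onto the central superpentagon
   omega^n(central face) of K_{n+k}, level by level. *)
Fixpoint subst (v : vtx) : vtx :=
  match v with
  | Orig i => Cen (Orig 0) (Orig 1) i
  | Mid a b => mid (subst a) (subst b)
  | Cen a b i => Cen (subst a) (subst b) i
  end.

Definition lift (k : nat) (v : vtx) : vtx := iter k subst v.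

(* A vertex (resp. face) of K is represented by a level n and a vertex (resp.
   face) of K_n; representatives are identified through the embeddings. *)
Definition KV := (nat * vtx)%type.
Definition KF := (nat * face)%type.

Definition Kvalid (x : KV) : Prop := x.2 \in flatten (Kn x.1).
Definition Kface (F : KF) : Prop := F.2 \in Kn F.1.

Definition up (N : nat) (x : KV) : vtx := lift (N - x.1) x.2.
Definition upF (N : nat) (F : KF) : face := map (lift (N - F.1)) F.2.

Definition Ksame (x y : KV) : Prop :=
  exists N, [/\ x.1 <= N, y.1 <= N & up N x = up N y].

Definition face_edge (f : face) (a b : vtx) : bool :=
  has (fun i => let p := nth (Orig 0) f i in
                let q := nth (Orig 0) f (i.+1 %% size f) in
                ((p == a) && (q == b)) || ((p == b) && (q == a)))
      (iota 0 (size f)).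

Definition edge_in_face (x y : KV) (F : KF) : Prop :=
  exists N, [/\ x.1 <= N, y.1 <= N, F.1 <= N & face_edge (upF N F) (up N x) (up N y)].

Definition Kadj (x y : KV) : Prop :=
  [/\ Kvalid x, Kvalid y & exists F, Kface F /\ edge_in_face x y F].

Inductive Kwalk : KV -> KV -> nat -> Prop :=
| Kwalk0 x y : Ksame x y -> Kwalk x y 0
| KwalkS x y z k : Kadj x y -> Kwalk y z k -> Kwalk x z k.+1.

Definition Kdist (x y : KV) (d : nat) : Prop :=
  Kwalk x y d /\ forall k, Kwalk x y k -> d <= k.

Definition inBall (u : KV) (n : nat) (F : KF) : Prop :=
  Kface F /\ forall v, v \in F.2 -> exists d, Kdist (F.1, v) u d /\ d <= n.

Definition Kbdry_edge (u : KV) (n : nat) (x y : KV) : Prop :=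
  Kadj x y /\ exists F1 F2, [/\ inBall u n F1, Kface F2, ~ inBall u n F2,
                               edge_in_face x y F1 & edge_in_face x y F2].

Definition Kbdry_vtx (u : KV) (n : nat) (x : KV) : Prop :=
  exists y, Kbdry_edge u n x y.

(* Main.v *)
Require Import Defs.
From mathcomp Require Import all_boot.
From mathcomp Require Import zify.
From Stdlib Require Import Classical.

Lemma face_size5 {m f} : f \in Kn m -> size f = 5.
Proof.
case: m => [|m] /=; first by rewrite inE => /eqP ->.
rewrite /omega => /flattenP [s /mapP [g _ ->]].
rewrite /subdiv_face inE => /orP [/eqP -> //|/mapP [i _ ->] //].
Qed.

Lemma up_lift (a : KV) {N L} : a.1 <= N -> N <= L -> up L a = Defs.lift (L - N) (up N a).
Proof.
move=> h1 h2; rewrite /up /Defs.lift -iterD; congr iter; lia.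
Qed.

Lemma upF_lift (F : KF) {N L} : F.1 <= N -> N <= L -> upF L F = map (Defs.lift (L - N)) (upF N F).
Proof.
move=> h1 h2; rewrite /upF -map_comp; apply: eq_map => v /=.
rewrite /Defs.lift -iterD; congr iter; lia.
Qed.

Lemma face_edge_map g f a b : face_edge f a b -> face_edge (map g f) (g a) (g b).
Proof.
rewrite /face_edge size_map => /hasP [i]; rewrite mem_iota add0n => hi /= H.
apply/hasP; exists i; first by rewrite mem_iota.
have hs : 0 < size f by lia.
have hj : i.+1 %% size f < size f by rewrite ltn_pmod.
rewrite /= !(nth_map (Orig 0)) //.
case/orP: H => /andP [/eqP -> /eqP ->]; by rewrite !eqxx ?orbT.
Qed.

Lemma Ksame_sym {a b} : Ksame a b -> Ksame b a.
Proof. by case=> N [h1 h2 h3]; exists N. Qed.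

Lemma Ksame_trans a b c : Ksame a b -> Ksame b c -> Ksame a c.
Proof.
case=> N [h1 h2 h3] [M [h4 h5 h6]]; exists (maxn N M); split; try lia.
rewrite (up_lift a (N:=N) (L:=maxn N M)) 1?(up_lift c (N:=M) (L:=maxn N M)); try lia.
rewrite -h6 h3 -!up_lift //; lia.
Qed.

Lemma Kadj_transport a b z : Kadj a z -> Ksame b a -> Kvalid b -> Kadj b z.
Proof.
case=> _ vz [F [hF [N [h1 h2 h3 he]]]] [M [h4 h5 h6]] vb.
split => //; exists F; split => //; exists (maxn N M); split; try lia.
rewrite (up_lift b (N:=M) (L:=maxn N M)) ?h6 -?up_lift; try lia.
rewrite (up_lift a (N:=N) (L:=maxn N M)) ?(up_lift z (N:=N) (L:=maxn N M)) ?(upF_lift F (N:=N) (L:=maxn N M)); try lia.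
exact: face_edge_map.
Qed.

Lemma walk_transport {a u k b} : Kwalk a u k -> Ksame b a -> Kvalid b -> Kwalk b u k.
Proof.
case=> [x y hs|x y z k' ha hw] hb vb.
  by apply: Kwalk0; apply: Ksame_trans hb hs.
by apply: KwalkS (hw); apply: Kadj_transport ha hb vb.
Qed.

Lemma exists_dist {a u k} : Kwalk a u k -> exists d, Kdist a u d /\ d <= k.
Proof.
elim: k {-2}k (leqnn k) => [|K IH] k hk hw.
  have k0 : k = 0 by lia.
  subst; exists 0; split => //; split => //.
case: (classic (exists k', k' < k /\ Kwalk a u k')) => [[k' [hk' hw']]|hn].
  have [d [hd hdk]] := IH k' ltac:(lia) hw'; exists d; split => //; lia.
exists k; split => //; split => // k' hw'.
case: (leqP k k') => // hlt; exfalso; apply: hn; by exists k'.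
Qed.

Lemma vertex_of_edge {x y F} : Kface F -> edge_in_face x y F ->
  exists2 j, j < size F.2 & Ksame x (F.1, nth (Orig 0) F.2 j).
Proof.
move=> hF [N [h1 h2 h3]]; have h5 := face_size5 hF.
rewrite /face_edge /upF size_map h5 => /hasP [i]; rewrite mem_iota add0n => hi /=.
have hj : i.+1 %% 5 < 5 by rewrite ltn_pmod.
rewrite !(nth_map (Orig 0)) ?h5 //.
case/orP => /andP [/eqP e1 /eqP e2].
  exists i; first by rewrite ?h5.
  by exists N; split => //=; rewrite /up /= e1.
exists (i.+1 %% 5); first by rewrite ?h5.
by exists N; split => //=; rewrite /up /= e2.
Qed.

Lemma valid_face {F : KF} {j} : Kface F -> j < size F.2 -> Kvalid (F.1, nth (Orig 0) F.2 j).
Proof.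
move=> hF hj; apply/flattenP; exists F.2 => //; exact: mem_nth.
Qed.

Lemma adj_face {F : KF} {i} : Kface F -> i < 5 ->
  Kadj (F.1, nth (Orig 0) F.2 i) (F.1, nth (Orig 0) F.2 (i.+1 %% 5)) /\
  Kadj (F.1, nth (Orig 0) F.2 (i.+1 %% 5)) (F.1, nth (Orig 0) F.2 i).
Proof.
move=> hF hi; have h5 := face_size5 hF.
have hj : i.+1 %% 5 < 5 by rewrite ltn_pmod.
have ex : forall a b, face_edge F.2 a b -> Kadj (F.1, a) (F.1, b) -> Kadj (F.1, a) (F.1, b) by [].
have E : forall a b, face_edge F.2 a b -> edge_in_face (F.1, a) (F.1, b) F.
  move=> a b he; exists F.1; split => //.
  by rewrite /upF /up /= subnn /Defs.lift /= map_id.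
have fe : face_edge F.2 (nth (Orig 0) F.2 i) (nth (Orig 0) F.2 (i.+1 %% 5)).
  apply/hasP; exists i; first by rewrite mem_iota h5.
  by rewrite /= h5 !eqxx.
have fe' : face_edge F.2 (nth (Orig 0) F.2 (i.+1 %% 5)) (nth (Orig 0) F.2 i).
  apply/hasP; exists i; first by rewrite mem_iota h5.
  by rewrite /= h5 !eqxx orbT.
split; (split; [apply: valid_face; rewrite ?h5 //|apply: valid_face; rewrite ?h5 //|]);
  exists F; split => //; exact: E.
Qed.

Lemma face_walk {F : KF} {u i j d} : Kface F -> i < 5 -> j < 5 ->
  Kwalk (F.1, nth (Orig 0) F.2 j) u d ->
  exists k, k <= d.+2 /\ Kwalk (F.1, nth (Orig 0) F.2 i) u k.
Proof.
move=> hF hi hj H.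
have fwd : forall i k, i < 5 -> Kwalk (F.1, nth (Orig 0) F.2 (i.+1 %% 5)) u k ->
    Kwalk (F.1, nth (Orig 0) F.2 i) u k.+1.
  by move=> i' k hi' hw; apply: KwalkS hw; case: (adj_face hF hi').
have bwd : forall i k, i < 5 -> Kwalk (F.1, nth (Orig 0) F.2 i) u k ->
    Kwalk (F.1, nth (Orig 0) F.2 (i.+1 %% 5)) u k.+1.
  by move=> i' k hi' hw; apply: KwalkS hw; case: (adj_face hF hi').
case: i hi => [|[|[|[|[|i]]]]] hi //; case: j hj H => [|[|[|[|[|j]]]]] hj H //.
all: first
  [ by exists d; split; [lia|]
  | exists d.+1; split; [lia|];
    first [ exact (fwd 0 _ isT H) | exact (fwd 1 _ isT H) | exact (fwd 2 _ isT H)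
          | exact (fwd 3 _ isT H) | exact (fwd 4 _ isT H)
          | exact (bwd 0 _ isT H) | exact (bwd 1 _ isT H) | exact (bwd 2 _ isT H)
          | exact (bwd 3 _ isT H) | exact (bwd 4 _ isT H) ]
  | exists d.+2; split; [lia|];
    first [ exact (fwd 0 _ isT (fwd 1 _ isT H)) | exact (fwd 1 _ isT (fwd 2 _ isT H))
          | exact (fwd 2 _ isT (fwd 3 _ isT H)) | exact (fwd 3 _ isT (fwd 4 _ isT H))
          | exact (fwd 4 _ isT (fwd 0 _ isT H))
          | exact (bwd 1 _ isT (bwd 0 _ isT H)) | exact (bwd 2 _ isT (bwd 1 _ isT H))
          | exact (bwd 3 _ isT (bwd 2 _ isT H)) | exact (bwd 4 _ isT (bwd 3 _ isT H))
          | exact (bwd 0 _ isT (bwd 4 _ isT H)) ] ].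
Qed.

Theorem mainTheorem17 (u : KV) (n : nat) (x : KV) :
  Kvalid u -> Kbdry_vtx u n x ->
  exists d, Kdist x u d /\ (d = n \/ d.+1 = n).
Proof.
move=> _ [y [Hadj [F1 [F2 [[hF1 Hin1] hF2 Hnin2 He1 He2]]]]].
have vx : Kvalid x by case: Hadj.
have [j1 hj1 hs1] := vertex_of_edge hF1 He1.
have [d0 [[hw0 _] hd0]] := Hin1 _ (mem_nth (Orig 0) hj1).
have hwx := walk_transport hw0 hs1 vx.
have [d [[hwd hmin] hdd0]] := exists_dist hwx.
exists d; split; first by split.
case: (leqP n.-1 d) => hlow; first lia.
exfalso; apply: Hnin2; split => // v hv.
have h5 := face_size5 hF2.
have [j2 hj2 hs2] := vertex_of_edge hF2 He2.
case/(nthP (Orig 0)): (hv) => i hi ei; rewrite -ei.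
have hw2 := walk_transport hwd (Ksame_sym hs2) (valid_face hF2 hj2).
rewrite h5 in hi hj2.
have [k [hk hwk]] := face_walk hF2 hi hj2 hw2.
have [d' [hd' hd'k]] := exists_dist hwk.
exists d'; split => //; lia.
Qed.
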